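(* Fix an integer $k\ge1$ and $p\in(0,1)$. For an integer $K=K(n)\le n-k$ define \[ T^K_{k+1}=\sum_{s\in C_{k+1},\ \min(s)\le K}\prod_{i\ne j\in s}Y_{i,j}\Bigl[\prod_{i=1}^{\min(s)-1}\Bigl(1-\prod_{j\in s}Y_{i,j}\Bigr)-\prod_{i=1}^{\min(s)-1}\Bigl(1-\prod_{j\in s_-}Y_{i,j}\Bigr)\Bigr]. \] If there is $\epsilon>0$ with $K(n)/\ln^{1+\epsilon}(n)\to\infty$ as $n\to\infty$, then $\mathbb{P}(T_{k+1}-T^K_{k+1}\ne0)\to0$ as $n\to\infty$.
   Context: $G(n,p)$ is the random graph on $[n]$ where each of the $\binom n2$ edges is present independently with probability $p$; $Y_{i,j}=Y_{j,i}$ is the indicator of edge $\{i,j\}$. $C_{k+1}$ is the set of $(k+1)$-element subsets of $[n]$, $s_-=s\setminus\{\min s\}$, and \[ T_{k+1}=\sum_{s\in C_{k+1}}\prod_{i\ne j\in s}Y_{i,j}\Bigl[\prod_{i=1}^{\min(s)-1}\Bigl(1-\prod_{j\in s}Y_{i,j}\Bigr)-\prod_{i=1}^{\min(s)-1}\Bigl(1-\prod_{j\in s_-}Y_{i,j}\Bigr)\Bigr], \] which is the number of $k$-simplices of the clique complex $X(n,p)$ of $G$ that are critical for the lexicographical matching (pairing each simplex $s$ having some $j<\min s$ with $s\cup\{j\}$ a simplex to $s\cup\{j_0\}$, $j_0$ the least such $j$). *)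

(* Defs.v *)
From HB Require Import structures.
From mathcomp Require Import all_boot all_order all_algebra.
From mathcomp Require Import all_classical all_reals all_analysis.
Unset Printing Implicit Defensive.
Import Order.TTheory GRing.Theory Num.Theory.
Local Open Scope ring_scope.

(* Vertices of G(n,p) are 'I_n; the ordinal i stands for the vertex i+1 of [n]. *)

Definition edges (n : nat) : {set {set 'I_n}} := [set e : {set 'I_n} | #|e| == 2%N].

Definition Y (R : realType) {n : nat} (E : {set {set 'I_n}}) (i j : 'I_n) : R :=
  ([set i; j] \in E)%:R.

Definition gnp_prob (R : realType) (n : nat) (p : R)
    (A : {set {set 'I_n}} -> bool) : R :=
  \sum_(E : {set {set 'I_n}} | (E \subset edges n) && A E)
     p ^+ #|E| * (1 - p) ^+ (#|edges n| - #|E|).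

(* 0-based minimum of a (nonempty) vertex set; min(s) (1-based) = minv s + 1. *)
Definition minv {n : nat} (s : {set 'I_n}) : nat := \big[minn/n]_(i in s) val i.

Definition crit_term (R : realType) {n : nat} (E : {set {set 'I_n}})
    (s : {set 'I_n}) : R :=
  (\prod_(i in s) \prod_(j in s | i != j) Y R E i j) *
  ((\prod_(i : 'I_n | (val i < minv s)%N) (1 - \prod_(j in s) Y R E i j)) -
   (\prod_(i : 'I_n | (val i < minv s)%N)
       (1 - \prod_(j in s | val j != minv s) Y R E i j))).

Definition Tcrit (R : realType) (n k : nat) (E : {set {set 'I_n}}) : R :=
  \sum_(s : {set 'I_n} | #|s| == k.+1) crit_term R E s.

Definition TcritK (R : realType) (n k : nat) (K : int) (E : {set {set 'I_n}}) : R :=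
  \sum_(s : {set 'I_n} | (#|s| == k.+1) && ((minv s).+1%:Z <= K)%R) crit_term R E s.

(* Main.v *)
Require Import Defs.
From HB Require Import structures.
From mathcomp Require Import all_boot all_order all_algebra zify.
From mathcomp Require Import all_classical all_reals all_analysis.
Import Order.TTheory GRing.Theory Num.Theory.
Import numFieldNormedType.Exports.
Local Open Scope classical_set_scope.
Local Open Scope ring_scope.

Lemma sum_set_prod (R : comNzRingType) (T : finType) (h : T -> bool -> R) :
  \sum_(E : {set T}) \prod_(x : T) h x (x \in E) = \prod_(x : T) (h x true + h x false).
Proof.
have -> : \prod_(x : T) (h x true + h x false) = \prod_(x : T) \sum_(b : bool) h x b.
  by apply: eq_bigr => x _; rewrite big_bool.
rewrite bigA_distr_bigA /=.
rewrite (reindex (fun E : {set T} => [ffun x => x \in E])) /=.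
  by apply: eq_bigr => E _; apply: eq_bigr => x _; rewrite ffunE.
exists (fun f : {ffun T -> bool} => [set x | f x]%SET) => [E _|f _].
  by apply/setP => x; rewrite inE ffunE.
by apply/ffunP => x; rewrite ffunE inE.
Qed.

Lemma bigmin_le (I : eqType) (r : seq I) (f : I -> nat) (n : nat) (y : I) :
  y \in r -> (\big[minn/n]_(i <- r) f i <= f y)%N.
Proof.
elim: r => //= a r IH; rewrite inE big_cons => /orP[/eqP->|/IH h].
  exact: geq_minl.
exact: leq_trans (geq_minr _ _) h.
Qed.

Lemma minv_le n (s : {set 'I_n}) j : j \in s -> (minv s <= val j)%N.
Proof.
move=> js; rewrite /minv -big_filter; apply: (bigmin_le _ _ _ _ j).
by rewrite mem_filter js /index_enum -enumT mem_enum.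
Qed.

Arguments minv_le {n s j}.

Definition ew {R : realType} {n} (p : R) (x : {set 'I_n}) (b : bool) : R :=
  if x \in edges n then (if b then p else 1 - p) else (if b then 0 else 1).

Definition Ex {R : realType} {n} (p : R) (f : {set {set 'I_n}} -> R) : R :=
  \sum_(E : {set {set 'I_n}}) (\prod_(x : {set 'I_n}) ew p x (x \in E)) * f E.

Section ExTheory.
Variables (R : realType) (n : nat) (p : R).
Hypotheses (p0 : 0 <= p) (p1 : p <= 1).

Lemma ew_ge0 (x : {set 'I_n}) b : 0 <= ew p x b.
Proof. rewrite /ew; case: (x \in edges n); case: b => //; by rewrite subr_ge0. Qed.

Lemma W_ge0 (E : {set {set 'I_n}}) : 0 <= \prod_(x : {set 'I_n}) ew p x (x \in E).
Proof. by apply: prodr_ge0 => x _; exact: ew_ge0. Qed.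

Lemma gnp_Ex (A : {set {set 'I_n}} -> bool) :
  gnp_prob R n p A = Ex p (fun E => (A E)%:R).
Proof.
rewrite /gnp_prob /Ex big_mkcond /=; apply: eq_bigr => E _.
have [sEU|nsEU] := boolP (E \subset edges n); last first.
  have [x xE xU] : exists2 x, x \in E & x \notin edges n.
    by move/subsetPn: nsEU => [x xE xU]; exists x.
  by rewrite /= (bigD1 x) //= /ew (negbTE xU) xE !mul0r.
rewrite /=; case: (A E); last by rewrite mulr0.
rewrite mulr1; symmetry; rewrite (bigID (fun x => x \in edges n)) /=.
rewrite [X in _ * X]big1 ?mulr1; last first.
  move=> x /negbTE xU; rewrite /ew xU.
  by case: ifP => // xE; move/fintype.subsetP: sEU => /(_ x xE); rewrite xU.
rewrite (bigID (fun x => x \in E)) /=.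
rewrite (eq_bigr (fun _ => p)); last by move=> x /andP[xU xE]; rewrite /ew xU xE.
rewrite [X in _ * X](eq_bigr (fun _ => 1 - p)); last first.
  by move=> x /andP[xU /negbTE xE]; rewrite /ew xU xE.
rewrite !prodr_const; congr (_ ^+ _ * _ ^+ _).
  apply: eq_card => x; rewrite [in LHS]unfold_in /=.
  by case xE: (x \in E); rewrite ?andbF ?andbT //; exact: (fintype.subsetP sEU).
rewrite -cardsDS //; apply: eq_card => x; rewrite [in LHS]unfold_in /= !inE.
by rewrite andbC.
Qed.

Lemma Ex_sum (I : finType) (f : I -> {set {set 'I_n}} -> R) :
  Ex p (fun E => \sum_(i : I) f i E) = \sum_(i : I) Ex p (f i).
Proof.
rewrite /Ex; under eq_bigr do rewrite mulr_sumr.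
by rewrite exchange_big.
Qed.

Lemma Ex_scale (c : R) (f : {set {set 'I_n}} -> R) :
  Ex p (fun E => c * f E) = c * Ex p f.
Proof.
rewrite /Ex mulr_sumr; apply: eq_bigr => E _; by rewrite mulrCA.
Qed.

Lemma Ex_ext (f g : {set {set 'I_n}} -> R) : (forall E, f E = g E) -> Ex p f = Ex p g.
Proof. by move=> fg; rewrite /Ex; apply: eq_bigr => E _; rewrite fg. Qed.

Lemma Ex0 : Ex p (fun _ : {set {set 'I_n}} => 0) = 0.
Proof. by rewrite /Ex big1 // => E _; rewrite mulr0. Qed.

Lemma Ex_le (f g : {set {set 'I_n}} -> R) : (forall E, f E <= g E) -> Ex p f <= Ex p g.
Proof.
move=> fg; rewrite /Ex; apply: ler_sum => E _; apply: ler_wpM2l => //.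
exact: W_ge0.
Qed.

Lemma Ex_mono (F : {set {set 'I_n}}) : F \subset edges n ->
  Ex p (fun E => \prod_(x in F) (x \in E)%:R) = p ^+ #|F|.
Proof.
move=> FU; rewrite /Ex.
have -> : p ^+ #|F| = \prod_(x : {set 'I_n})
     (ew p x true * (if x \in F then 1 else 1) + ew p x false * (if x \in F then 0 else 1)).
  rewrite -prodr_const [RHS](bigID (fun x => x \in F)) /=.
  rewrite [X in _ * X]big1 ?mulr1; last first.
    move=> x /negbTE xF; rewrite xF !mulr1 /ew; by case: (x \in edges n); rewrite ?add0r // addrC subrK.
  apply: eq_bigr => x xF; rewrite xF mulr1 mulr0 addr0 /ew.
  by rewrite (fintype.subsetP FU x xF).
rewrite -(sum_set_prod _ _ (fun x b => ew p x b * (if x \in F then b%:R else 1))).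
apply: eq_bigr => E _.
by rewrite [X in _ * X]big_mkcond /= -big_split.
Qed.
End ExTheory.
Arguments Ex_ext {R n p f g}.
Arguments Ex_sum {R n p I f}.
Arguments Ex_scale {R n p} c f.
Arguments Ex_mono {R n p F}.
Arguments Ex_le {R n p} p0 p1 {f g}.
Arguments Ex0 {R n p}.

Local Close Scope classical_set_scope.

Definition rowp {n} (s : {set 'I_n}) (i : 'I_n) : bool := (val i < minv s)%N.

Definition As {n} (s : {set 'I_n}) (E : {set {set 'I_n}}) : bool :=
  [forall i : 'I_n, rowp s i ==> [exists j in s, [set i; j] \notin E]].

Lemma row_notin n (s : {set 'I_n}) i j : rowp s i -> j \in s -> (val i < val j)%N.
Proof. by rewrite /rowp => ri js; apply: leq_trans ri (minv_le js). Qed.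
Arguments row_notin {n s i j}.

Lemma row_neq n (s : {set 'I_n}) i j : rowp s i -> j \in s -> i != j.
Proof.
move=> ri js; apply/eqP => eij; move: (row_notin ri js); by rewrite eij ltnn.
Qed.

Arguments row_neq {n s i j}.

Section Event.
Variables (R : realType) (n : nat) (p : R) (s : {set 'I_n}).

Lemma nAs_ex E : ~~ As s E ->
  exists2 i, rowp s i & forall j, j \in s -> [set i; j] \in E.
Proof.
move/forallPn => [i]; rewrite negb_imply => /andP[ri /existsPn allj].
exists i => // j js; move: (allj j); by rewrite js /= negbK.
Qed.
Arguments nAs_ex {E}.

Lemma As_ind E : (As s E)%:R = \prod_(i | rowp s i) (1 - \prod_(j in s) Y R E i j) :> R.
Proof.
have [h|h] := boolP (As s E).
  rewrite big1 // => i ri.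
  move/forallP: h => /(_ i); rewrite ri /= => /existsP[j /andP[js jE]].
  by rewrite (bigD1 j) //= /Y (negbTE jE) mul0r subr0.
have [i ri allj] := nAs_ex h.
rewrite (bigD1 i) //= big1 ?subrr ?mul0r // => j js.
by rewrite /Y allj.
Qed.

Lemma crit0 E : ~~ As s E -> crit_term R E s = 0.
Proof.
move=> /nAs_ex [i ri allj]; rewrite /crit_term.
have z1 : \prod_(i0 : 'I_n | (val i0 < minv s)%N) (1 - \prod_(j in s) Y R E i0 j) = 0.
  by rewrite (bigD1 i) //= big1 ?subrr ?mul0r // => j js; rewrite /Y allj.
have z2 : \prod_(i0 : 'I_n | (val i0 < minv s)%N)
    (1 - \prod_(j in s | val j != minv s) Y R E i0 j) = 0.
  by rewrite (bigD1 i) //= big1 ?subrr ?mul0r // => j /andP[js _]; rewrite /Y allj.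
by rewrite z1 z2 subrr mulr0.
Qed.

Lemma prod_h (J : {set 'I_n}) (g : 'I_n -> R) :
  \prod_(i : 'I_n) (if i \in J then (if rowp s i then g i else 0) else 1)
  = if J \subset [set i | rowp s i] then \prod_(i in J) g i else 0.
Proof.
case: ifP => [sub|/negbT/fintype.subsetPn [i iJ]].
  rewrite [RHS]big_mkcond; apply: eq_bigr => i _.
  case iJ: (i \in J) => //.
  by move: (fintype.subsetP sub i iJ); rewrite inE => ->.
rewrite inE => /negbTE ri.
by rewrite (bigD1 i) //= iJ ri mul0r.
Qed.


Lemma P_As (k : nat) : 0 <= p -> p <= 1 -> #|s| = k.+1 ->
  Ex p (fun E => (As s E)%:R) = (1 - p ^+ k.+1) ^+ #|[set i | rowp s i]|.
Proof.
move=> p0 p1 hs.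
pose h (E : {set {set 'I_n}}) (i : 'I_n) (b : bool) : R :=
  if b then (if rowp s i then - \prod_(j in s) Y R E i j else 0) else 1.
pose h' (i : 'I_n) (b : bool) : R :=
  if b then (if rowp s i then - p ^+ k.+1 else 0) else 1.
have e1 E : (As s E)%:R = \sum_(J : {set 'I_n}) \prod_(i : 'I_n) h E i (i \in J).
  rewrite As_ind sum_set_prod big_mkcond; apply: eq_bigr => i _.
  rewrite /h; case: (rowp s i); by rewrite ?add0r // addrC.
rewrite (Ex_ext e1) Ex_sum.
have e2 : (1 - p ^+ k.+1) ^+ #|[set i | rowp s i]| =
    \sum_(J : {set 'I_n}) \prod_(i : 'I_n) h' i (i \in J).
  rewrite sum_set_prod -prodr_const big_mkcond; apply: eq_bigr => i _.
  rewrite /h' inE; case: (rowp s i); by rewrite ?add0r // addrC.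
rewrite e2; apply: eq_bigr => J _.
rewrite /h /h' /= (prod_h J (fun i => - p ^+ k.+1)).
rewrite (Ex_ext (fun E => prod_h J (fun i => - \prod_(j in s) Y R E i j))).
case: ifP => sub; last exact: Ex0.
pose FJ := [set [set x.1; x.2] | x in finset.setX J s].
have inj : {in finset.setX J s &, injective (fun x : 'I_n * 'I_n => [set x.1; x.2])}.
  move=> [i j] [i' j'] /finset.setXP[iJ js] /finset.setXP[i'J j's] /= eq.
  have ri : rowp s i by move: (fintype.subsetP sub i iJ); rewrite inE.
  have ri' : rowp s i' by move: (fintype.subsetP sub i' i'J); rewrite inE.
  have ii' : i = i'.
    have : i \in [set i'; j'] by rewrite -eq set21.
    rewrite !inE => /orP[/eqP //|/eqP eij'].
    by move: (row_neq ri j's); rewrite eij' eqxx.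
  subst i'; congr pair.
  have : j \in [set i; j'] by rewrite -eq set22.
  rewrite !inE => /orP[/eqP eji|/eqP //].
  by move: (row_neq ri js); rewrite eji eqxx.
have FU : FJ \subset edges n.
  apply/fintype.subsetP => x /imsetP[[i j] /finset.setXP[iJ js] ->].
  have ri : rowp s i by move: (fintype.subsetP sub i iJ); rewrite inE.
  by rewrite inE cards2 (row_neq ri js).
have e3 E : \prod_(i in J) - \prod_(j in s) Y R E i j =
    (-1) ^+ #|J| * \prod_(x in FJ) (x \in E)%:R.
  rewrite prodrN big_imset //= pair_big /=; congr (_ * _).
  by apply: eq_bigl => -[i j]; rewrite finset.in_setX.
rewrite (Ex_ext e3) Ex_scale Ex_mono // card_in_imset // cardsX hs.
by rewrite prodrN prodr_const -exprM mulnC.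
Qed.
End Event.

Lemma bin_le_exp (n m : nat) : ('C(n, m) <= n ^ m)%N.
Proof.
apply: (@leq_trans ('C(n, m) * m`!)); first by rewrite leq_pmulr // fact_gt0.
rewrite bin_ffact ffact_prod.
have -> : (n ^ m = \prod_(i < m) n)%N by rewrite prod_nat_const card_ord.
by apply: leq_prod => i _; rewrite leq_subr.
Qed.

Lemma card_rows n (s : {set 'I_n}) : (minv s <= n)%N ->
  #|[set i : 'I_n | rowp s i]| = minv s.
Proof.
move=> mn; rewrite -[RHS](card_ord (minv s)).
have -> : [set i : 'I_n | rowp s i] = [set widen_ord mn i | i in 'I_(minv s)].
  apply/setP => i; rewrite inE; apply/idP/imsetP => [ri|[j _ ->]].
    by exists (Ordinal ri) => //; apply: val_inj.
  by rewrite /rowp /= ltn_ord.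
rewrite card_imset // => a b /(congr1 val) /= ?; exact: val_inj.
Qed.

Lemma minv_lt n (s : {set 'I_n}) j : j \in s -> (minv s < n)%N.
Proof. by move=> js; apply: leq_ltn_trans (minv_le js) (ltn_ord j). Qed.
Arguments minv_lt {n s j}.

Lemma main_bound (R : realType) n k (p : R) (K : int) (N : nat) :
  0 <= p -> p <= 1 -> N%:Z <= K ->
  gnp_prob R n p (fun E => Tcrit R n k E != TcritK R n k K E)
  <= (n ^ k.+1)%:R * (1 - p ^+ k.+1) ^+ N.
Proof.
move=> p0 p1 NK.
pose S (s : {set 'I_n}) := (#|s| == k.+1) && ~~ ((minv s).+1%:Z <= K).
rewrite gnp_Ex.
apply: le_trans (Ex_le p0 p1
  (g := fun E => \sum_(s : {set 'I_n}) (S s)%:R * (As s E)%:R) _) _.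
  move=> E; have [h|] := boolP (Tcrit R n k E != TcritK R n k K E); last first.
    by move=> _; apply: sumr_ge0 => s _; rewrite mulr_ge0 ?ler0n.
  have [s0 /andP[Ss0 As0]] : exists s0, S s0 && As s0 E.
    apply/existsP; apply: contraNT h => /existsPn hn.
    rewrite /Tcrit /TcritK (bigID (fun s => ((minv s).+1%:Z <= K))) /=.
    rewrite [X in _ + X]big1 ?addr0 // => s /andP[c nK].
    apply: crit0; move: (hn s); by rewrite /S c nK /=.
  rewrite (bigD1 s0) //= Ss0 As0 mulr1 lerDl.
  by apply: sumr_ge0 => s _; rewrite mulr_ge0 ?ler0n.
rewrite Ex_sum.
under eq_bigr do rewrite Ex_scale.
pose c := 1 - p ^+ k.+1.
have c0 : 0 <= c by rewrite subr_ge0 exprn_ile1.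
have c1 : c <= 1 by rewrite lerBlDr lerDl exprn_ge0.
apply: (@le_trans _ _ (\sum_(s : {set 'I_n}) (#|s| == k.+1)%:R * c ^+ N)).
  apply: ler_sum => s _; rewrite /S.
  case hs: (#|s| == k.+1) => /=; last by rewrite !mul0r.
  case hK: ((minv s).+1%:Z <= K) => /=; first by rewrite mul0r mul1r exprn_ge0.
  rewrite !mul1r (@P_As R n p s k p0 p1 (eqP hs)).
  have [j js] : exists j, j \in s.
    apply/set0Pn; by rewrite -card_gt0 (eqP hs).
  rewrite card_rows; last exact: ltnW (minv_lt js).
  apply: ler_wiXn2l => //.
  move/negbT: hK; move: NK; clear; lia.
have -> : \sum_(s : {set 'I_n}) (#|s| == k.+1)%:R * c ^+ N =
    \sum_(s : {set 'I_n} | #|s| == k.+1) c ^+ N.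
  rewrite [RHS]big_mkcond /=; apply: eq_bigr => s _.
  by case: (_ == _); rewrite ?mul1r ?mul0r.
rewrite sumr_const -[X in X <= _]mulr_natr [X in _ <= X]mulrC.
apply: ler_wpM2l; first exact: exprn_ge0.
rewrite ler_nat.
have -> : #|[pred s : {set 'I_n} | #|s| == k.+1]| = #|[set s : {set 'I_n} | #|s| == k.+1]|.
  by apply: eq_card => s; rewrite inE.
by rewrite card_draws card_ord bin_le_exp.
Qed.

Lemma divN_aux (R : realType) (a L l : R) : l != 0 -> a / (- l) * L * l = - (a * L).
Proof.
by move=> l0; rewrite mulrAC invrN mulrN mulNr -mulrA mulVf // mulr1 mulNr.
Qed.

Local Open Scope classical_set_scope.
Local Open Scope ring_scope.

Theorem proposition4p5 (R : realType) (k : nat) (p : R) (K : nat -> int) (eps : R) :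
  (1 <= k)%N -> 0 < p -> p < 1 ->
  (forall n : nat, K n <= n%:Z - k%:Z) ->
  0 < eps ->
  (fun n : nat => (K n)%:~R / (ln (n%:R : R)) `^ (1 + eps)) @ \oo --> +oo ->
  (fun n : nat => gnp_prob R n p (fun E => Tcrit R n k E != TcritK R n k (K n) E)) @ \oo --> 0.
Proof.
move=> k1 p0 p1 _ eps0 hK.
have p0' : 0 <= p by exact: ltW.
have p1' : p <= 1 by exact: ltW.
pose c := 1 - p ^+ k.+1.
have c0 : 0 < c by rewrite subr_gt0 exprn_ilt1.
have c1 : c < 1 by rewrite ltrBlDr ltrDl exprn_gt0.
have lc : ln c < 0 by apply: ln_lt0; rewrite c0 c1.
pose M := (k.+2)%:R / (- ln c).
have M0 : 0 < M by rewrite divr_gt0 // oppr_gt0.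
apply/cvgr0Pnorm_le => e e0.
move/cvgryPge: hK => /(_ M) ev1.
have ev2 := nbhs_infty_ger (expR (1 : R)).
have ev3 := nbhs_infty_ger e^-1.
near=> n.
have H1 : M <= (K n)%:~R / ln (R:=R) n%:R `^ (1 + eps) by near: n; exact: ev1.
have H2 : expR 1 <= (n%:R : R) by near: n; exact: ev2.
have H3 : e^-1 <= (n%:R : R) by near: n; exact: ev3.
have n0 : 0 < (n%:R : R) by apply: lt_le_trans H2; exact: expR_gt0.
have L1 : 1 <= ln (n%:R : R).
  by rewrite -{1}(expRK (1:R)) ler_ln ?posrE ?expR_gt0.
have PL : ln (n%:R : R) <= ln (n%:R : R) `^ (1 + eps).
  by apply: le1r_powR => //; rewrite lerDl ltW.
have P0 : 0 < ln (n%:R : R) `^ (1 + eps) by apply: lt_le_trans PL; apply: lt_le_trans L1.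
rewrite ler_pdivlMr // in H1.
have KL : M * ln (n%:R : R) <= (K n)%:~R.
  apply: le_trans H1; apply: ler_wpM2l => //; exact: ltW.
have Kpos : 0 <= K n.
  rewrite -(ler0z R); apply: le_trans KL; apply: mulr_ge0; first exact: ltW.
  by apply: le_trans L1.
have NK : (`|K n|%N)%:Z <= K n by rewrite gez0_abs.
have NR : (`|K n|%N%:R : R) = (K n)%:~R by rewrite -{2}(gez0_abs Kpos).
have gnp0 : 0 <= gnp_prob R n p (fun E => Tcrit R n k E != TcritK R n k (K n) E).
  rewrite gnp_Ex -(@Ex0 R n p); apply: Ex_le => // E; exact: ler0n.
rewrite ger0_norm //; apply: le_trans (@main_bound R n k p (K n) _ p0' p1' NK) _.
set N := `|K n|%N.
have x1 : (n%:R : R) ^+ k.+2 * c ^+ N <= 1.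
  have xpos : 0 < (n%:R : R) ^+ k.+2 * c ^+ N by rewrite mulr_gt0 // exprn_gt0.
  rewrite -(@ler_ln R) ?posrE // ln1 lnM ?posrE ?exprn_gt0 // !lnXn //.
  have : N%:R * ln c <= M * ln (n%:R : R) * ln c.
    by rewrite ler_wnM2r ?NR // ltW.
  have eqM : M * ln (n%:R : R) * ln c = - (k.+2%:R * ln (n%:R : R)).
    by rewrite /M divN_aux // lt_eqF.
  rewrite eqM -[ln (n%:R) *+ _]mulr_natl -[ln c *+ _]mulr_natl => h.
  by apply: le_trans (lerD (lexx _) h) _; rewrite subrr.
rewrite natrX.
have : (n%:R : R) ^+ k.+1 * c ^+ N <= (n%:R)^-1.
  by rewrite -(ler_pM2l n0) mulrV ?unitf_gt0 // mulrA -exprS.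
move/le_trans; apply.
by rewrite -[e]invrK lef_pV2 ?posrE ?invr_gt0.
Unshelve. all: by end_near.
Qed.
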